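(* There is a polynomial $p$ such that the following holds. Let $\mathbb{F}$ be a field, let $n,s\ge 1$ and $d\ge 0$, let $N_{n,d}=\binom{n+d}{d}$, and let $\mathcal{D}\subseteq\mathbb{F}[c_1,\ldots,c_{N_{n,d}}]$ be a class of polynomials whose variables are identified with the coefficients of polynomials in $\mathbb{F}[x_1,\ldots,x_n]^{d}$ (polynomials of total degree at most $d$). If there is an $s$-succinct hitting set for $\mathcal{D}$, then there is a $p(n,d,s)$-succinct generator for $\mathcal{D}$ which is computable by algebraic circuits of size at most $p(n,d,s)$.
   Context: $\mathbb{F}[x_1,\ldots,x_n]^d$ denotes the space of polynomials of total degree at most $d$; there are $N_{n,d}$ monomials of degree at most $d$, and $\mathrm{coeff}(f)\in\mathbb{F}^{N_{n,d}}$ denotes the vector of coefficients of $f$ in the monomial basis. A set $\mathcal{H}\subseteq\mathbb{F}^{N_{n,d}}$ is a hitting set for $\mathcal{D}$ if every non-zero $D\in\mathcal{D}$ has some $\alpha\in\mathcal{H}$ with $D(\alpha)\ne0$. An $s$-succinct hitting set for $\mathcal{D}$ is a set $\mathcal{C}\subseteq\mathbb{F}[x_1,\ldots,x_n]^d$ of polynomials, each computed by an algebraic circuit of size at most $s$, such that $\{\mathrm{coeff}(f):f\in\mathcal{C}\}$ is a hitting set for $\mathcal{D}$. A polynomial map $\mathcal{G}=(\mathcal{G}_{x^a}(y))_{a}:\mathbb{F}^{r}\to\mathbb{F}^{N_{n,d}}$ (coordinates indexed by the monomials $x^a$ of degree at most $d$) is an $s'$-succinct generator for $\mathcal{D}$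 computable by size-$s''$ circuits if, writing $G(x,y)=\sum_a \mathcal{G}_{x^a}(y)x^a$: (i) $G(x,y)$ is computed by an algebraic circuit of size at most $s''$; (ii) for every $\alpha\in\mathbb{F}^r$, $G(x,\alpha)\in\mathbb{F}[x]^d$ is computed by a circuit of size at most $s'$; (iii) for every $D\in\mathcal{D}$, $D$ is non-zero iff $D(\mathcal{G}(y))$ is non-zero as a polynomial in $y$. *)

(* Defs.v *)
From HB Require Import structures.
From mathcomp Require Import all_boot all_order all_algebra.
From mathcomp Require Import mpoly.
Set Implicit Arguments. Unset Strict Implicit. Unset Printing Implicit Defensive.
Import Order.TTheory GRing.Theory Num.Theory.
Local Open Scope ring_scope.

(* A circuit is a non-empty list of gates; gate number k may be an input
   variable x_i, a field constant, or the sum / product of two gates with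
   indices < k. *)
Inductive gate (F : Type) :=
  | GVar of nat
  | GConst of F
  | GAdd of nat & nat
  | GMul of nat & nat.
Arguments GVar {F}. Arguments GAdd {F}. Arguments GMul {F}.

Definition circuit (F : Type) := seq (gate F).

Definition csize (F : Type) (c : circuit F) : nat := size c.

Fixpoint wf_gates (F : Type) (m k : nat) (c : circuit F) : bool :=
  match c with
  | [::] => true
  | g :: c' =>
      let ok := match g with
                | GVar i => (i < m)%N
                | GConst _ => true
                | GAdd j l => (j < k)%N && (l < k)%N
                | GMul j l => (j < k)%N && (l < k)%N
                end in
      ok && wf_gates m k.+1 c'
  end.

Section Eval.
Variables (F : comNzRingType) (m : nat).

Fixpoint eval_gates (vals : seq {mpoly F[m]}) (c : circuit F)
  : seq {mpoly F[m]} :=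
  match c with
  | [::] => vals
  | g :: c' =>
      let v := match g with
               | GVar i => if (i < m)%N =P true is ReflectT h
                           then 'X_(Ordinal h) else 0
               | GConst a => a%:MP
               | GAdd j l => nth 0 vals j + nth 0 vals l
               | GMul j l => nth 0 vals j * nth 0 vals l
               end in
      eval_gates (rcons vals v) c'
  end.

Definition computes (c : circuit F) (f : {mpoly F[m]}) : Prop :=
  [/\ (0 < size c)%N, wf_gates m 0 c & last 0 (eval_gates [::] c) = f].

Definition has_circuit_size (f : {mpoly F[m]}) (s : nat) : Prop :=
  exists c : circuit F, computes c f /\ (csize c <= s)%N.
End Eval.

Definition Nnd (n d : nat) : nat := #|{: 'X_{1..n < d.+1}}|.

Definition mon (n d : nat) (i : 'I_(Nnd n d)) : 'X_{1..n} :=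
  bmnm (enum_val i).

Definition deg_le (F : nzRingType) (n d : nat) (f : {mpoly F[n]}) : bool :=
  (msize f <= d.+1)%N.

Definition coeffv (F : nzRingType) (n d : nat) (f : {mpoly F[n]})
  : 'I_(Nnd n d) -> F := fun i => f@_(mon i).

Section HS.
Variables (F : fieldType) (n d : nat).
Local Notation N := (Nnd n d).

Definition hitting_set (Dcl : {mpoly F[N]} -> Prop)
  (H : ('I_N -> F) -> Prop) : Prop :=
  forall D, Dcl D -> D != 0 -> exists2 a, H a & D.@[a] != 0.

Definition succinct_hitting_set (s : nat) (Dcl : {mpoly F[N]} -> Prop)
  (C : {mpoly F[n]} -> Prop) : Prop :=
  [/\ (forall f, C f -> deg_le d f),
      (forall f, C f -> has_circuit_size f s) &
      hitting_set Dcl (fun a => exists2 f, C f & a = @coeffv F n d f)].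

(* x-variables are 0..n-1, y-variables are n..n+r-1 in F[x,y] *)
Definition yvar (r : nat) : r.-tuple {mpoly F[n + r]} :=
  [tuple 'X_(rshift n j) | j < r].

(* G(x,y) = sum_a G_{x^a}(y) x^a *)
Definition gen_poly (r : nat) (G : 'I_N -> {mpoly F[r]}) : {mpoly F[n + r]} :=
  \sum_(i < N) (G i \mPo yvar r) * mmap1 (fun k : 'I_n => 'X_(lshift r k)) (mon i).

Definition gen_at (r : nat) (G : 'I_N -> {mpoly F[r]}) (alpha : 'I_r -> F)
  : {mpoly F[n]} :=
  \sum_(i < N) (G i).@[alpha] *: 'X_[mon i].

Definition succinct_generator (s' s'' : nat) (Dcl : {mpoly F[N]} -> Prop)
  (r : nat) (G : 'I_N -> {mpoly F[r]}) : Prop :=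
  [/\ has_circuit_size (gen_poly G) s'',
      (forall alpha : 'I_r -> F, has_circuit_size (gen_at G alpha) s') &
      (forall D, Dcl D -> (D != 0 <-> D \mPo [tuple G i | i < N] != 0))].
End HS.

Definition eval3 (p : {mpoly int[3]}) (n d s : nat) : int :=
  p.@[fun i : 'I_3 => (nth 0%N [:: n; d; s] i)%:Z].

(* Main.v *)
Require Import Defs.
From HB Require Import structures.
From mathcomp Require Import all_boot all_order all_algebra.
From mathcomp Require Import mpoly.
From mathcomp Require Import zify.
From Stdlib Require Import FunctionalExtensionality.
Set Implicit Arguments. Unset Strict Implicit. Unset Printing Implicit Defensive.
Import Order.TTheory GRing.Theory Num.Theory.
Local Open Scope ring_scope.

Section SLP.
Variables (F : comNzRingType) (m : nat).
Local Notation R := {mpoly F[m]}.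
Local Notation evg := (@eval_gates F m).

Definition gateval (vals : seq R) (g : gate F) : R :=
  match g with
  | GVar i => if (i < m)%N =P true is ReflectT h
              then 'X_(Ordinal h) else 0
  | GConst a => a%:MP
  | GAdd j l => nth 0 vals j + nth 0 vals l
  | GMul j l => nth 0 vals j * nth 0 vals l
  end.

Lemma eval_cons vals g c :
  evg vals (g :: c) = evg (rcons vals (gateval vals g)) c.
Proof. by []. Qed.

Lemma eval_cat vals c1 c2 :
  evg vals (c1 ++ c2) = evg (evg vals c1) c2.
Proof. by elim: c1 vals => //= g c1 IH vals; exact: IH. Qed.

Lemma eval_ext vals c : exists t, evg vals c = vals ++ t.
Proof.
elim: c vals => [|g c IH] vals /=; first by exists [::]; rewrite cats0.
have [t ->] := IH (rcons vals (gateval vals g)).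
by exists (gateval vals g :: t); rewrite cat_rcons.
Qed.

Lemma size_eval vals c : size (evg vals c) = (size vals + size c)%N.
Proof.
elim: c vals => [|g c IH] vals /=; first by rewrite addn0.
by rewrite IH size_rcons addSnnS.
Qed.

Lemma wf_cat k (c1 c2 : circuit F) :
  wf_gates m k (c1 ++ c2) = wf_gates m k c1 && wf_gates m (k + size c1) c2.
Proof.
elim: c1 k => [|g c1 IH] k /=; first by rewrite addn0.
by rewrite IH addSnnS andbA.
Qed.

Definition atom (v : R) := (exists i : 'I_m, v = 'X_i) \/ (exists a : F, v = a%:MP).
Definition step (prev : seq R) (v : R) :=
  atom v \/ exists a b, [/\ a \in prev, b \in prev & (v = a + b \/ v = a * b)].

Fixpoint slp (prev : seq R) (vs : seq R) : Prop :=
  match vs with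
  | [::] => True
  | v :: vs' => step prev v /\ slp (v :: prev) vs'
  end.

Lemma slp_circ vs prev (c : circuit F) :
  wf_gates m 0 c -> {subset prev <= evg [::] c} -> slp prev vs ->
  exists c', wf_gates m 0 (c ++ c') /\
             evg [::] (c ++ c') = evg [::] c ++ vs.
Proof.
elim: vs prev c => [|v vs IH] prev c wfc sub /=.
  by move=> _; exists [::]; rewrite !cats0.
move=> [st sl].
set V := evg [::] c.
have szV : size V = size c by rewrite /V size_eval.
have [g [okg gv]] : exists g, wf_gates m (size c) [:: g] /\ gateval V g = v.
  case: st => [[[i ->]|[a ->]]|[a [b [ha hb hv]]]].
  - exists (GVar i); split; first by rewrite /= ltn_ord.
    rewrite /=; case: eqP => [h|]; last by rewrite ltn_ord.
    by congr ('X_ _); apply: val_inj.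
  - by exists (GConst a).
  - have ia : (index a V < size c)%N by rewrite -szV index_mem sub.
    have ib : (index b V < size c)%N by rewrite -szV index_mem sub.
    case: hv => ->.
    + exists (GAdd (index a V) (index b V)); rewrite /= ia ib; split => //.
      by rewrite !nth_index ?sub.
    + exists (GMul (index a V) (index b V)); rewrite /= ia ib; split => //.
      by rewrite !nth_index ?sub.
have wf1 : wf_gates m 0 (rcons c g) by rewrite -cats1 wf_cat wfc.
have ev1 : evg [::] (rcons c g) = rcons V v.
  by rewrite -cats1 eval_cat /= -gv.
have sub1 : {subset v :: prev <= evg [::] (rcons c g)}.
  move=> w; rewrite inE ev1 mem_rcons inE => /orP [->//|/sub ->]; by rewrite orbT.
have [c'' [wf2 ev2]] := IH _ _ wf1 sub1 sl.
exists (g :: c''); rewrite -cat_rcons wf2; split => //.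
by rewrite ev2 ev1 cat_rcons.
Qed.

Lemma slp_prefix p vs1 vs2 : slp p (vs1 ++ vs2) -> slp p vs1.
Proof. by elim: vs1 p => //= v vs1 IH p [h1 /IH]. Qed.

Lemma slp_has_circuit vs f : slp [::] vs -> f \in vs -> has_circuit_size f (size vs).
Proof.
move=> + hf; case/splitPr: hf => vs1 vs2 sl.
have {}sl : slp [::] (rcons vs1 f).
  by apply: (@slp_prefix _ (rcons vs1 f) vs2); rewrite cat_rcons.
have [c' [wf' ev']] := @slp_circ _ [::] [::] isT (fun x (h : x \in [::]) => h) sl.
rewrite /= in wf' ev'.
have hs : size c' = size (rcons vs1 f) by rewrite -ev' size_eval.
exists c'; split; last first.
  rewrite /csize hs size_cat size_rcons /=; lia.
split => //; last by rewrite ev' last_rcons.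
by rewrite hs size_rcons.
Qed.

Lemma step_mono p p' v : {subset p <= p'} -> step p v -> step p' v.
Proof.
move=> sub [h|[a [b [ha hb hv]]]]; first by left.
by right; exists a, b; split => //; apply: sub.
Qed.

Lemma slp_mono vs p p' : {subset p <= p'} -> slp p vs -> slp p' vs.
Proof.
elim: vs p p' => //= v vs IH p p' sub [h1 h2]; split; first exact: step_mono h1.
apply: IH h2 => w; rewrite !inE => /orP [->//|/sub ->]; by rewrite orbT.
Qed.

Lemma slp_cat p vs1 vs2 : slp p vs1 -> slp (rev vs1 ++ p) vs2 -> slp p (vs1 ++ vs2).
Proof.
elim: vs1 p => //= v vs1 IH p [h1 h2] h3; split => //.
by apply: IH => //; rewrite rev_cons cat_rcons in h3.
Qed.

Definition gen (p : seq R) (k : nat) (G : seq R) :=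
  exists vs, [/\ slp p vs, (size vs <= k)%N & {subset G <= vs ++ p}].

Lemma gen_mono p p' k G : {subset p <= p'} -> gen p k G -> gen p' k G.
Proof.
move=> sub [vs [h1 h2 h3]]; exists vs; split => //; first exact: slp_mono h1.
move=> w /h3; rewrite !mem_cat => /orP [->//|/sub ->]; by rewrite orbT.
Qed.

Lemma gen_weak p k k' G G' : (k <= k')%N -> {subset G' <= G} -> gen p k G -> gen p k' G'.
Proof.
move=> hk sub [vs [h1 h2 h3]]; exists vs; split => //; first exact: leq_trans hk.
by move=> w /sub /h3.
Qed.

Lemma gen_seq p k1 k2 G1 G2 : gen p k1 G1 -> gen (G1 ++ p) k2 G2 ->
  gen p (k1 + k2) (G1 ++ G2).
Proof.
move=> [vs1 [a1 b1 c1]] g2.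
have [vs2 [a2 b2 c2]] : gen (rev vs1 ++ p) k2 G2.
  apply: gen_mono g2 => w; rewrite !mem_cat mem_rev => /orP [/c1|->]; last by rewrite orbT.
  by rewrite mem_cat => /orP [->|->] //; rewrite orbT.
exists (vs1 ++ vs2); split; first exact: slp_cat.
  by rewrite size_cat leq_add.
move=> w; rewrite mem_cat => /orP [/c1|/c2]; rewrite !mem_cat ?mem_rev.
  by case/orP => ->; rewrite ?orbT.
by case/orP => [->|/orP [] ->]; rewrite ?orbT.
Qed.

Lemma gen_nil p G : {subset G <= p} -> gen p 0 G.
Proof. by move=> sub; exists [::]; split. Qed.

Lemma gen_atom p v : atom v -> gen p 1 [:: v].
Proof.
move=> h; exists [:: v]; split => //=; first by split => //; left.
by move=> w; rewrite inE => /eqP ->; rewrite inE eqxx.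
Qed.

Lemma gen_op p a b v : a \in p -> b \in p -> (v = a + b \/ v = a * b) -> gen p 1 [:: v].
Proof.
move=> ha hb hv; exists [:: v]; split => //=; first by split => //; right; exists a, b.
by move=> w; rewrite inE => /eqP ->; rewrite inE eqxx.
Qed.

Lemma gen_family (I : eqType) p k (s : seq I) (g : I -> R) :
  (forall i, i \in s -> gen p k [:: g i]) -> gen p (size s * k) (map g s).
Proof.
elim: s => [|i s IH] h /=; first by apply: gen_nil.
rewrite mulSn -cat1s.
apply: gen_seq; first by apply: h; rewrite inE eqxx.
apply: gen_mono (IH _) => [w|j hj]; first by rewrite mem_cat => ->; rewrite orbT.
by apply: h; rewrite inE hj orbT.
Qed.

Lemma gen_sum p l (f : 'I_l -> R) : (forall j, f j \in p) ->
  gen p l.+1 [:: \sum_(j < l) f j].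
Proof.
elim: l f => [|l IH] f h.
  by rewrite big_ord0; apply: gen_atom; right; exists 0; rewrite mpolyC0.
rewrite big_ord_recr /=.
set S := \sum_(i < l) f (widen_ord (leqnSn l) i).
have g1 : gen p l.+1 [:: S] by apply: IH.
have g2 : gen ([:: S] ++ p) 1 [:: S + f ord_max].
  apply: (@gen_op _ S (f ord_max)); last by left.
    by rewrite mem_cat inE eqxx.
  by rewrite mem_cat h orbT.
have := gen_seq g1 g2; rewrite addn1; apply: gen_weak => //.
by move=> w; rewrite inE => /eqP ->; rewrite mem_cat !inE eqxx orbT.
Qed.

Lemma gen_sumprod p l (a b : 'I_l -> R) : (forall j, a j \in p) -> (forall j, b j \in p) ->
  gen p (l + l.+1) [:: \sum_(j < l) a j * b j].
Proof.
move=> ha hb.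
have g1 := @gen_family _ p 1 (enum 'I_l) (fun j => a j * b j)
  (fun j _ => gen_op (ha j) (hb j) (or_intror erefl)).
rewrite size_enum_ord muln1 in g1.
have := gen_seq g1 (@gen_sum _ l (fun j => a j * b j) _).
move=> H; apply: gen_weak (H _) => //.
  by move=> w; rewrite inE => /eqP ->; rewrite mem_cat inE eqxx orbT.
by move=> j; rewrite mem_cat; apply/orP; left; apply: map_f; rewrite mem_enum.
Qed.


Lemma wf_nth k0 (c : circuit F) i : wf_gates m k0 c -> (i < size c)%N ->
  wf_gates m (k0 + i) [:: nth (GConst 0) c i].
Proof.
elim: c k0 i => //= g c IH k0 [|i] /andP [h1 h2] hi /=; first by rewrite addn0 h1.
by rewrite -addSnnS; apply: IH.
Qed.

Lemma gateval_ext V t g : wf_gates m (size V) [:: g] -> gateval (V ++ t) g = gateval V g.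
Proof.
case: g => [i|a|j l|j l] //= /andP [/andP [hj hl] _]; by rewrite !nth_cat hj hl.
Qed.

Lemma eval_nth (c : circuit F) k : wf_gates m 0 c -> (k < size c)%N ->
  nth 0 (evg [::] c) k = gateval (evg [::] c) (nth (GConst 0) c k).
Proof.
move=> wfc hk.
have ok := wf_nth wfc hk; rewrite add0n in ok.
set g := nth (GConst 0) c k.
set V := evg [::] (take k c).
have szV : size V = k by rewrite /V size_eval size_take hk.
have [t Ec] : exists t, evg [::] c = rcons V (gateval V g) ++ t.
  rewrite -{1}(cat_take_drop k c) (drop_nth (GConst 0) hk) eval_cat eval_cons.
  exact: eval_ext.
rewrite Ec -cats1 -catA nth_cat szV ltnn subnn /= gateval_ext //.
by rewrite szV.
Qed.

End SLP.

Section Univ.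
Variables (R : comNzRingType) (n s : nat) (pi : nat -> nat -> R) (x : 'I_n -> R).

Definition Pk (h : nat -> nat -> R) k e := \sum_(j < k) pi k (n.+1 + s + j) * h j e.
Definition Qk (h : nat -> nat -> R) k e := \sum_(j < k) pi k (n.+1 + s + s + j) * h j e.
Definition hstep (h : nat -> nat -> R) k e :=
  (if e == 0%N then pi k 0 else 0) +
  (if e == 1%N then \sum_(i < n) pi k i.+1 * x i else 0) +
  \sum_(j < k) pi k (n.+1 + j) * h j e +
  \sum_(e1 < e.+1) Pk h k e1 * Qk h k (e - e1).

Fixpoint Hall k : nat -> nat -> R :=
  if k is k'.+1 then
    (fun j e => if (j < k')%N then Hall k' j e else hstep (Hall k') k' e)
  else (fun _ _ => 0).

Definition H k e := Hall k.+1 k e.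

Definition Out d := \sum_(k < s) pi k (n.+1 + s + s + s) * \sum_(e < d.+1) H k e.

Lemma hstep_ext h h' k e : (forall j e, (j < k)%N -> h j e = h' j e) ->
  hstep h k e = hstep h' k e.
Proof.
move=> eqh; rewrite /hstep /Pk /Qk.
congr (_ + _ + _).
  by apply: eq_bigr => j _; rewrite eqh.
apply: eq_bigr => e1 _; congr (_ * _); apply: eq_bigr => j _; by rewrite eqh.
Qed.

Lemma Hall_lt k j e : (j < k)%N -> Hall k j e = H j e.
Proof.
elim: k j e => [//|k IH] j e /=; rewrite ltnS leq_eqVlt => /orP [/eqP ->|hj].
  by rewrite /H /= ltnn.
by rewrite hj IH.
Qed.

Lemma H_rec k e : H k e = hstep H k e.
Proof. by rewrite /H /= ltnn; apply: hstep_ext => j e' hj; rewrite Hall_lt. Qed.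

End Univ.


Lemma H_morph (R R' : comNzRingType) (phi : {rmorphism R -> R'}) n s pi x k e :
  phi (@H R n s pi x k e) = H s (fun k t => phi (pi k t)) (fun i => phi (x i)) k e.
Proof.
elim/ltn_ind: k e => k IH e.
rewrite !H_rec /hstep /Pk /Qk !rmorphD /= !(fun_if phi) rmorph0 !rmorph_sum.
congr (_ + _ + _ + _).
- congr (if _ then _ else _); apply: eq_bigr => i _; by rewrite rmorphM.
- apply: eq_bigr => j _; by rewrite rmorphM IH.
- apply: eq_bigr => e1 _; rewrite rmorphM !rmorph_sum; congr (_ * _);
  apply: eq_bigr => j _; by rewrite rmorphM IH.
Qed.

Lemma Out_morph (R R' : comNzRingType) (phi : {rmorphism R -> R'}) n s pi x d :
  phi (@Out R n s pi x d) = Out s (fun k t => phi (pi k t)) (fun i => phi (x i)) d.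
Proof.
rewrite /Out rmorph_sum; apply: eq_bigr => k _; rewrite rmorphM rmorph_sum.
by congr (_ * _); apply: eq_bigr => e _; rewrite H_morph.
Qed.

Lemma H_homog (S : comNzRingType) n s (c : nat -> nat -> S) k e :
  @H {mpoly S[n]} n s (fun k t => (c k t)%:MP) (fun i => 'X_i) k e \is e.-homog.
Proof.
elim/ltn_ind: k e => k IH e.
rewrite H_rec /hstep /Pk /Qk.
rewrite rpredD // ?rpredD //.
- case: eqP => [->|_]; last exact: rpred0.
  by rewrite -alg_mpolyC rpredZ // dhomog1.
- case: eqP => [->|_]; last exact: rpred0.
  apply: rpred_sum => i _; rewrite mul_mpolyC rpredZ //.
  by rewrite dhomogX; apply/eqP; apply: mdeg1.
- apply: rpred_sum => j _; rewrite mul_mpolyC rpredZ //; exact: IH.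
- apply: rpred_sum => e1 _.
  have le1 : (e1 <= e)%N by rewrite -ltnS.
  have := dhomogM (d := e1) (e := (e - e1)%N) _ _; rewrite subnKC //; apply.
    apply: rpred_sum => j _; rewrite mul_mpolyC rpredZ //; exact: IH.
  apply: rpred_sum => j _; rewrite mul_mpolyC rpredZ //; exact: IH.
Qed.

Lemma sum_delta (R : nzRingType) k (f : 'I_k -> R) (o : 'I_k) j : (o : nat) = j ->
  \sum_(i < k) (((i : nat) == j)%:R * f i) = f o.
Proof.
move=> <-; rewrite (bigD1 o) //= eqxx mul1r big1 ?addr0 // => i hi.
by move: hi; rewrite -(inj_eq val_inj) => /negbTE ->; rewrite mul0r.
Qed.

Lemma Out_coef0 (S : comNzRingType) n s (c : nat -> nat -> S) d m :
  (d < mdeg m)%N ->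
  (@Out {mpoly S[n]} n s (fun k t => (c k t)%:MP) (fun i => 'X_i) d)@_m = 0.
Proof.
move=> hm; rewrite /Out raddf_sum big1 // => k _.
rewrite /= mcoeffCM raddf_sum big1 ?mulr0 // => e _.
have hne : mdeg m != e.
  have : (e < mdeg m)%N by exact: leq_trans (ltn_ord e) hm.
  by rewrite ltn_neqAle => /andP [] /=; rewrite eq_sym.
exact: (dhomog_nemf_coeff (H_homog n s c k e) hne).
Qed.

Lemma msize_le_coef (S : nzRingType) n (p : {mpoly S[n]}) d :
  (forall m, (d < mdeg m)%N -> p@_m = 0) -> (msize p <= d.+1)%N.
Proof.
move=> hp; rewrite msizeE; apply/bigmax_leqP_seq => m hm _.
rewrite ltnS leqNgt; apply/negP => /hp; rewrite mcoeff_msupp in hm.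
by move=> h; rewrite h eqxx in hm.
Qed.

Section Tau.
Variables (F : comNzRingType) (n : nat).
Local Notation tau := (mmap (polyC \o @mpolyC n F) (fun i : 'I_n => ('X_i)%:P * 'X)).

Lemma tauC a : tau a%:MP = (a%:MP)%:P.
Proof. by rewrite mmapC. Qed.

Lemma tauX i : tau 'X_i = ('X_i)%:P * 'X.
Proof. by rewrite mmapX mmap1U. Qed.

Lemma tau_trunc d (f : {mpoly F[n]}) : (msize f <= d.+1)%N ->
  \sum_(e < d.+1) (tau f)`_e = f.
Proof.
move=> hf; rewrite (mmapE d.+1) //.
have E (m : 'X_{1..n}) : mmap1 (fun i : 'I_n => ('X_i)%:P * 'X) m =
    ('X_[m])%:P * 'X^(mdeg m) :> {poly {mpoly F[n]}}.
  rewrite /mmap1; under eq_bigr do rewrite exprMn.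
  rewrite big_split /= prodrXr -mdegE mpolyXE_id rmorph_prod.
  by congr (_ * _); apply: eq_bigr => i _; rewrite rmorphXn.
under eq_bigr do rewrite coef_sum.
rewrite exchange_big /=.
rewrite {2}(mpolywE hf); apply: eq_bigr => m _.
under eq_bigr do rewrite E mulrA -rmorphM coefCM coefXn.
rewrite -mul_mpolyC.
rewrite (eq_bigr (fun e : 'I_d.+1 => (((e:nat) == mdeg m)%:R * ((f@_m)%:MP * 'X_[m])))); last first.
  by move=> e _; rewrite mulrC.
exact: (@sum_delta _ d.+1 (fun=> (f@_m)%:MP * 'X_[m]) (Ordinal (bmdeg m)) _ erefl).
Qed.

End Tau.

Ltac bsimpl := repeat match goal with |- context [if ?b then _ else _] =>
  first [rewrite (_ : b = true); [|lia] | rewrite (_ : b = false); [|lia]] end.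

Definition Wd n s := (n.+1 + s + s + s).+1.

Section Spec.
Variables (F : comNzRingType) (n s : nat) (c : circuit F).
Local Notation R := {mpoly F[n]}.
Local Notation evg := (@eval_gates F n).
Local Notation tau := (mmap (polyC \o @mpolyC n F) (fun i : 'I_n => ('X_i)%:P * 'X)).

Definition spec k t : F :=
 if (k < size c)%N && (t < Wd n s)%N then
   (match nth (GConst 0) c k with
   | GConst a => if t == 0%N then a else 0
   | GVar i => if (0 < t <= n)%N then ((t.-1)%N == i)%:R else 0
   | GAdd j l => if (n < t <= n + s)%N then ((t - n.+1)%N == j)%:R + ((t - n.+1)%N == l)%:R else 0
   | GMul j l => if (n + s < t <= n + s + s)%N then ((t - n.+1 - s)%N == j)%:R
                 else if (n + s + s < t <= n + s + s + s)%N then ((t - n.+1 - s - s)%N == l)%:R else 0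
   end) + (if t == (n.+1 + s + s + s)%N then (k == (size c).-1)%:R else 0)
 else 0.

Variable (k : nat).
Hypothesis hk : (k < size c)%N.

Lemma specC : spec k 0 = (if nth (GConst 0) c k is GConst a then a else 0).
Proof. rewrite /spec /Wd; bsimpl; case: nth => *; bsimpl; by rewrite ?addr0. Qed.

Lemma specA i : (i < n)%N ->
  spec k i.+1 = (if nth (GConst 0) c k is GVar i' then (i == i')%:R else 0).
Proof. move=> hi; rewrite /spec /Wd; bsimpl; case: nth => *; bsimpl; by rewrite ?addr0. Qed.

Lemma specU j : (j < s)%N -> spec k (n.+1 + j) =
  (if nth (GConst 0) c k is GAdd j1 l1 then (j == j1)%:R + (j == l1)%:R else 0).
Proof.
move=> hj; rewrite /spec /Wd; bsimpl; case: nth => *; bsimpl; rewrite ?addr0 //.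
by rewrite addKn.
Qed.

Lemma specP j : (j < s)%N -> spec k (n.+1 + s + j) =
  (if nth (GConst 0) c k is GMul j1 l1 then (j == j1)%:R else 0).
Proof.
move=> hj; rewrite /spec /Wd; bsimpl; case: nth => *; bsimpl; rewrite ?addr0 //.
by rewrite -!addnA !addKn.
Qed.

Lemma specQ j : (j < s)%N -> spec k (n.+1 + s + s + j) =
  (if nth (GConst 0) c k is GMul j1 l1 then (j == l1)%:R else 0).
Proof.
move=> hj; rewrite /spec /Wd; bsimpl; case: nth => *; bsimpl; rewrite ?addr0 //.
by rewrite -!addnA !addKn.
Qed.

End Spec.



Lemma sum_mul0 (R : nzRingType) k (f : 'I_k -> R) : \sum_(j < k) 0 * f j = 0.
Proof. by rewrite big1 // => j _; rewrite mul0r. Qed.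

Section HSpec.
Variables (F : comNzRingType) (n s : nat) (c : circuit F).
Local Notation R := {mpoly F[n]}.
Local Notation evg := (@eval_gates F n).
Local Notation tau := (mmap (polyC \o @mpolyC n F) (fun i : 'I_n => ('X_i)%:P * 'X)).

Lemma H_spec : wf_gates n 0 c -> (size c <= s)%N -> forall k e, (k < size c)%N ->
  @H R n s (fun k t => (spec n s c k t)%:MP) (fun i => 'X_i) k e =
  (tau (nth 0 (evg [::] c) k))`_e.
Proof.
move=> wfc hs; elim/ltn_ind => k IH e hk.
have hks : (k < s)%N by exact: leq_trans hk hs.
have ok := wf_nth wfc hk; rewrite add0n in ok.
rewrite (eval_nth wfc hk) H_rec /hstep /Pk /Qk /=.
rewrite (specC n s hk).
under [\sum_(i < n) _]eq_bigr => i _ do rewrite (specA s hk (ltn_ord i)).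
under [\sum_(j < k) (spec n s c k (n.+1 + j))%:MP * _]eq_bigr => j _ do
  rewrite (specU n hk (ltn_trans (ltn_ord j) hks)).
under [\sum_(e1 < e.+1) _]eq_bigr => e1 _.
  under eq_bigr => j _ do rewrite (specP n hk (ltn_trans (ltn_ord j) hks)).
  under [\sum_(j < k) (spec n s c k (n.+1 + s + s + j))%:MP * _]eq_bigr => j _ do rewrite (specQ n hk (ltn_trans (ltn_ord j) hks)).
  over.
have IH' j e' : (j < k)%N -> H s (fun k t => (spec n s c k t)%:MP) (fun i => 'X_i) j e' =
   (tau (nth 0 (evg [::] c) j))`_e'.
  by move=> hj; apply: IH => //; exact: ltn_trans hk.
move: ok; case E: (nth (GConst 0) c k) => [i0|a|j1 l1|j1 l1] ok /=.
- have hi0 : (i0 < n)%N by move: ok => /andP [].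
  rewrite [X in _ + X]big1 ?addr0; last by move=> e1 _ /=; rewrite !mpolyC0 !sum_mul0 mul0r.
  rewrite mpolyC0 sum_mul0 addr0 if_same add0r.
  case: eqP => [h|]; last by rewrite hi0.
  rewrite tauX coefMX coefC.
  under eq_bigr do rewrite mpolyC_nat.
  rewrite (sum_delta (fun i : 'I_n => 'X_i) (o := Ordinal h) erefl).
  by case: e => [|[|e]].
- rewrite [X in _ + X]big1 ?addr0; last by move=> e1 _ /=; rewrite !mpolyC0 !sum_mul0 mul0r.
  rewrite mpolyC0 sum_mul0 if_same !addr0.
  by rewrite !sum_mul0 addr0 tauC coefC.
- move: ok => /andP [/andP [hj1 hl1] _].
  rewrite [X in _ + X]big1 ?addr0; last by move=> e1 _ /=; rewrite !mpolyC0 !sum_mul0 mul0r.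
  rewrite mpolyC0 sum_mul0 !if_same !add0r.
  under eq_bigr do rewrite mpolyCD !mpolyC_nat mulrDl.
  rewrite big_split /=.
  rewrite (sum_delta (fun j : 'I_k => H s (fun k t => (spec n s c k t)%:MP) (fun i => 'X_i) j e) (o := Ordinal hj1) erefl).
  rewrite (sum_delta (fun j : 'I_k => H s (fun k t => (spec n s c k t)%:MP) (fun i => 'X_i) j e) (o := Ordinal hl1) erefl) /=.
  by rewrite !IH' // rmorphD coefD.
- move: ok => /andP [/andP [hj1 hl1] _].
  rewrite !mpolyC0 !sum_mul0 !if_same !add0r.
  rewrite rmorphM coefM; apply: eq_bigr => e1 _ /=.
  under eq_bigr do rewrite mpolyC_nat.
  rewrite (sum_delta (fun j : 'I_k => H s (fun k t => (spec n s c k t)%:MP) (fun i => 'X_i) j e1) (o := Ordinal hj1) erefl).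
  under eq_bigr do rewrite mpolyC_nat.
  rewrite (sum_delta (fun j : 'I_k => H s (fun k t => (spec n s c k t)%:MP) (fun i => 'X_i) j (e - e1)) (o := Ordinal hl1) erefl) /=.
  by rewrite !IH'.
Qed.
End HSpec.

Lemma specZ (F : comNzRingType) n s (c : circuit F) k : (0 < size c)%N ->
  spec n s c k (n.+1 + s + s + s) = (k == (size c).-1)%:R.
Proof.
move=> hc; rewrite /spec /Wd; case: (ltnP k (size c)) => hk.
  by bsimpl; case: nth => *; bsimpl; rewrite add0r.
bsimpl; rewrite (_ : (k == (size c).-1) = false) //; lia.
Qed.

Lemma Out_spec (F : comNzRingType) n s d (c : circuit F) (f : {mpoly F[n]}) :
  computes c f -> (size c <= s)%N -> (msize f <= d.+1)%N ->
  @Out {mpoly F[n]} n s (fun k t => (spec n s c k t)%:MP) (fun i => 'X_i) d = f.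
Proof.
move=> [hc wfc lastc] hs hf.
have hcs : ((size c).-1 < s)%N by lia.
rewrite /Out.
under eq_bigr do rewrite specZ // mpolyC_nat.
rewrite (sum_delta (fun k : 'I_s => \sum_(e < d.+1) H s (fun k t => (spec n s c k t)%:MP) (fun i : 'I_n => 'X_i) k e) (o := Ordinal hcs) erefl) /=.
have hlt : ((size c).-1 < size c)%N by lia.
under eq_bigr => e _ do rewrite (H_spec wfc hs e hlt).
transitivity (last 0 (@eval_gates F n [::] c)); last exact: lastc.
rewrite -nth_last size_eval add0n tau_trunc //.
have -> : (size c).-1 = (size (@eval_gates F n [::] c)).-1 by rewrite size_eval.
by rewrite nth_last lastc.
Qed.

Ltac memt := rewrite ?mem_cat ?inE ?eqxx ?orbT //.

Lemma gen_par (F : comNzRingType) m (p : seq {mpoly F[m]}) k1 k2 G1 G2 :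
  gen p k1 G1 -> gen p k2 G2 -> gen p (k1 + k2) (G1 ++ G2).
Proof.
move=> g1 g2; apply: gen_seq g1 _; apply: gen_mono g2 => w hw; by memt; rewrite hw orbT.
Qed.

Definition Be n s d := (1 + (n + n.+1) + (s + s.+1) + (d.+1 + d.+2) + 3)%N.
Definition B0 n s d := (2 * (d.+1 * (s + s.+1)) + d.+1 * Be n s d)%N.
Definition Ktot n s d := (n + s * Wd n s + s * B0 n s d + (s * d.+2 + (s + s.+1)))%N.

Section OutGen.
Variables (F : comNzRingType) (m n s d : nat) (pi : nat -> nat -> {mpoly F[m]})
  (x : 'I_n -> {mpoly F[m]}).
Local Notation R := {mpoly F[m]}.
Local Notation HH := (H s pi x).
Hypothesis hpi : forall k t, (k < s)%N -> (t < Wd n s)%N -> atom (pi k t).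
Hypothesis hx : forall i, atom (x i).

Definition atoms := map x (enum 'I_n) ++
  map (fun p => pi p.1 p.2) [seq (k, t) | k <- iota 0 s, t <- iota 0 (Wd n s)].

Lemma mem_atoms_pi k t : (k < s)%N -> (t < Wd n s)%N -> pi k t \in atoms.
Proof.
move=> hk ht; rewrite mem_cat; apply/orP; right.
apply/mapP; exists (k, t) => //; apply: (allpairs_f pair); by rewrite mem_iota.
Qed.

Lemma mem_atoms_x i : x i \in atoms.
Proof. by rewrite mem_cat map_f ?mem_enum. Qed.

Lemma gen_atoms : gen [::] (n + s * Wd n s) atoms.
Proof.
have g1 := @gen_family _ _ _ [::] 1 (enum 'I_n) x (fun i _ => gen_atom [::] (hx i)).
have g2 := @gen_family _ _ _ [::] 1 [seq (k, t) | k <- iota 0 s, t <- iota 0 (Wd n s)]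
  (fun p => pi p.1 p.2) _.
rewrite size_enum_ord muln1 in g1.
rewrite size_allpairs !size_iota muln1 in g2.
apply: gen_par g1 (g2 _).
move=> [k t] /allpairsP [[k' t'] [hk ht /= [-> ->]]] /=.
apply: gen_atom; apply: hpi; by move: hk ht; rewrite !mem_iota.
Qed.


Lemma stage_e k e P : (k < s)%N -> (e <= d)%N -> {subset atoms <= P} ->
  (forall j e, (j < k)%N -> (e <= d)%N -> HH j e \in P) ->
  (forall e, (e <= d)%N -> Pk n s pi HH k e \in P) ->
  (forall e, (e <= d)%N -> Qk n s pi HH k e \in P) ->
  gen P (Be n s d) [:: HH k e].
Proof.
move=> hk he hA hH hP hQ.
have hpk t : (t < Wd n s)%N -> pi k t \in P.
  by move=> ht; apply: hA; apply: mem_atoms_pi.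
set A0 := if e == 0%N then pi k 0 else 0.
set X1 := if e == 1%N then \sum_(i < n) pi k i.+1 * x i else 0.
set U := \sum_(j < k) pi k (n.+1 + j) * HH j e.
set C := \sum_(e1 < e.+1) Pk n s pi HH k e1 * Qk n s pi HH k (e - e1).
have gA : gen P 1 [:: A0].
  rewrite /A0; case: eqP => _.
    have : gen P 0 [:: pi k 0] by apply: gen_nil => w; rewrite inE => /eqP ->; apply: hpk.
    exact: gen_weak.
  by apply: gen_atom; right; exists 0; rewrite mpolyC0.
have gX : gen P (n + n.+1) [:: X1].
  rewrite /X1; case: eqP => _.
    apply: gen_sumprod => i; first by apply: hpk; have := ltn_ord i; rewrite /Wd; lia.
    by apply: hA; apply: mem_atoms_x.
  apply: gen_weak (gen_atom P (v := 0) _) => //; first lia.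
  by right; exists 0; rewrite mpolyC0.
have gU : gen P (k + k.+1) [:: U].
  apply: gen_sumprod => j; first by apply: hpk; have := ltn_ord j; rewrite /Wd; lia.
  by apply: hH => //; exact: ltn_ord.
have gC : gen P (e.+1 + e.+2) [:: C].
  apply: gen_sumprod => e1; [apply: hP | apply: hQ]; have := ltn_ord e1; lia.
have g4 := gen_par gA (gen_par gX (gen_par gU gC)).
have g5 := gen_seq g4 (_ : gen _ 1 [:: A0 + X1]).
have {g5} g5 := g5 ltac:(apply: (@gen_op _ _ _ A0 X1); [memt|memt|by left]).
have g6 := gen_seq g5 (_ : gen _ 1 [:: A0 + X1 + U]).
have {g6} g6 := g6 ltac:(apply: (@gen_op _ _ _ (A0 + X1) U); [memt|memt|by left]).
have g7 := gen_seq g6 (_ : gen _ 1 [:: A0 + X1 + U + C]).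
have {g7} g7 := g7 ltac:(apply: (@gen_op _ _ _ (A0 + X1 + U) C); [memt|memt|by left]).
apply: gen_weak g7; first by rewrite /Be; lia.
move=> w; rewrite inE => /eqP ->; rewrite H_rec.
by memt.
Qed.


Definition Hs k := [seq HH j e | j <- iota 0 k, e <- iota 0 d.+1].

Lemma stage k P : (k < s)%N -> {subset atoms <= P} ->
  (forall j e, (j < k)%N -> (e <= d)%N -> HH j e \in P) ->
  gen P (B0 n s d) [seq HH k e | e <- iota 0 d.+1].
Proof.
move=> hk hA hH.
have hpk t : (t < Wd n s)%N -> pi k t \in P.
  by move=> ht; apply: hA; apply: mem_atoms_pi.
have gP : gen P (d.+1 * (k + k.+1)) [seq Pk n s pi HH k e | e <- iota 0 d.+1].
  have := @gen_family _ _ _ P (k + k.+1) (iota 0 d.+1) (fun e => Pk n s pi HH k e).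
  rewrite size_iota; apply => e he; apply: gen_sumprod => j.
    by apply: hpk; have := ltn_ord j; rewrite /Wd; lia.
  by apply: hH => //; move: he; rewrite mem_iota; lia.
have gQ : gen P (d.+1 * (k + k.+1)) [seq Qk n s pi HH k e | e <- iota 0 d.+1].
  have := @gen_family _ _ _ P (k + k.+1) (iota 0 d.+1) (fun e => Qk n s pi HH k e).
  rewrite size_iota; apply => e he; apply: gen_sumprod => j.
    by apply: hpk; have := ltn_ord j; rewrite /Wd; lia.
  by apply: hH => //; move: he; rewrite mem_iota; lia.
have gPQ := gen_par gP gQ.
have gE : gen (([seq Pk n s pi HH k e | e <- iota 0 d.+1] ++ [seq Qk n s pi HH k e | e <- iota 0 d.+1]) ++ P)
   (d.+1 * Be n s d) [seq HH k e | e <- iota 0 d.+1].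
  have := @gen_family _ _ _ (([seq Pk n s pi HH k e | e <- iota 0 d.+1] ++ [seq Qk n s pi HH k e | e <- iota 0 d.+1]) ++ P)
    (Be n s d) (iota 0 d.+1) (fun e => HH k e).
  rewrite size_iota; apply => e he; apply: stage_e => //.
  - by move: he; rewrite mem_iota; lia.
  - by move=> w /hA hw; rewrite mem_cat hw orbT.
  - by move=> j e' hj he'; rewrite mem_cat hH ?orbT.
  - move=> e' he'; rewrite mem_cat; apply/orP; left; rewrite mem_cat; apply/orP; left.
    by apply: map_f; rewrite mem_iota.
  - move=> e' he'; rewrite mem_cat; apply/orP; left; rewrite mem_cat; apply/orP; right.
    by apply: map_f; rewrite mem_iota.
have := gen_seq gPQ gE.
have hkk : (d.+1 * (k + k.+1) <= d.+1 * (s + s.+1))%N by apply: leq_mul => //; lia.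
apply: gen_weak; first by rewrite /B0; lia.
by move=> w hw; rewrite mem_cat hw orbT.
Qed.

Lemma gen_Hs k : (k <= s)%N -> gen atoms (k * B0 n s d) (Hs k).
Proof.
elim: k => [|k IH] hk; first by apply: gen_nil.
have g1 := IH (ltnW hk).
have g2 := gen_seq g1 (stage (P := Hs k ++ atoms) hk _ _).
rewrite mulSn addnC; apply: gen_weak (g2 _ _) => //.
- move=> w /allpairsP [[j e] [hj he ->]].
  rewrite mem_iota in hj; rewrite mem_iota in he.
  change (HH j e \in Hs k ++ [seq HH k e | e <- iota 0 d.+1]).
  simpl in hj, he.
  case: (ltngtP j k) => [hjk|hjk|->].
  + by rewrite mem_cat (allpairs_f (fun j e => HH j e)) // mem_iota; lia.
  + lia.
  + by rewrite mem_cat map_f ?orbT // mem_iota.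
- by move=> w hw; rewrite mem_cat hw orbT.
- move=> j e hj he; rewrite mem_cat (allpairs_f (fun j e => HH j e)) //; by rewrite mem_iota; lia.
Qed.

Lemma gen_Out : gen [::] (Ktot n s d) [:: Out s pi x d].
Proof.
have gH := gen_Hs (leqnn s); rewrite -[atoms]cats0 in gH.
have g1 := gen_seq gen_atoms gH.
set P := (atoms ++ Hs s) ++ [::].
have gT : gen P (s * d.+2) [seq \sum_(e < d.+1) HH k e | k <- iota 0 s].
  have := @gen_family _ _ _ P d.+2 (iota 0 s) (fun k => \sum_(e < d.+1) HH k e).
  rewrite size_iota; apply => k hk; apply: gen_sum => e.
  have hk' : (k < s)%N by move: hk; rewrite mem_iota.
  have hm : HH k e \in Hs s.
    apply: (allpairs_f (fun j e => HH j e)); rewrite mem_iota.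
    - lia.
    - have := ltn_ord e; lia.
  by rewrite /P !mem_cat hm orbT.
have gO : gen ([seq \sum_(e < d.+1) HH k e | k <- iota 0 s] ++ P) (s + s.+1) [:: Out s pi x d].
  apply: gen_sumprod => k.
    have ha : pi k (n.+1 + s + s + s) \in atoms.
      by apply: mem_atoms_pi; [exact: ltn_ord | rewrite /Wd].
    by rewrite mem_cat /P mem_cat mem_cat ha !orbT.
  by rewrite mem_cat map_f // mem_iota add0n ltn_ord.
have := gen_seq g1 (gen_seq gT gO).
apply: gen_weak; first by rewrite /Ktot; lia.
by move=> w; rewrite inE => /eqP ->; rewrite !mem_cat inE eqxx !orbT.
Qed.

End OutGen.

Lemma gen_circuit (F : comNzRingType) m K (f : {mpoly F[m]}) :
  gen [::] K [:: f] -> has_circuit_size f K.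
Proof.
move=> [vs [h1 h2 h3]].
have hf : f \in vs by have := h3 f; rewrite inE eqxx cats0; apply.
have [c [hc hs]] := slp_has_circuit h1 hf.
by exists c; split => //; exact: leq_trans h2.
Qed.

Lemma circuit_mono (F : comNzRingType) m (f : {mpoly F[m]}) K K' :
  (K <= K')%N -> has_circuit_size f K -> has_circuit_size f K'.
Proof. by move=> hK [c [h1 h2]]; exists c; split => //; exact: leq_trans hK. Qed.

Section Main.
Variables (F : fieldType) (n d s : nat).
Local Notation N := (Nnd n d).
Local Notation W := (Wd n s).
Local Notation r := (s * W).+1.

Definition Y k t : {mpoly F[r]} :=
  if (k < s)%N && (t < W)%N then 'X_(inord (k * W + t)) else 0.

Definition UA : {mpoly {mpoly F[r]}[n]} :=
  Out s (fun k t => (Y k t)%:MP) (fun i => 'X_i) d.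

Definition GG : 'I_N -> {mpoly F[r]} := fun i => UA@_(mon i).

Lemma UA_coef0 m : (d < mdeg m)%N -> UA@_m = 0.
Proof. exact: Out_coef0. Qed.

Lemma UA_msize : (msize UA <= d.+1)%N.
Proof. exact: msize_le_coef UA_coef0. Qed.

Lemma sum_mon (V : nmodType) (Fm : 'X_{1..n} -> V) :
  \sum_(i < N) Fm (mon i) = \sum_(m : 'X_{1..n < d.+1}) Fm m.
Proof.
rewrite /mon -(big_enum_val (A := {: 'X_{1..n < d.+1}}) (fun m => Fm (bmnm m))).
by apply: eq_bigl.
Qed.


Local Notation psi := (mmap (comp_mpoly (yvar F n r)) (fun k : 'I_n => 'X_(lshift r k))).

Lemma gen_poly_UA : gen_poly GG = psi UA.
Proof.
rewrite /gen_poly (mmapE d.+1) ?UA_msize //.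
by rewrite -(sum_mon (fun m => (UA@_m \mPo yvar F n r) * mmap1 (fun k : 'I_n => 'X_(lshift r k)) m)).
Qed.

Lemma psi_UA : psi UA = Out s (fun k t => Y k t \mPo yvar F n r) (fun i => 'X_(lshift r i)) d.
Proof.
rewrite /UA Out_morph.
have -> : (fun k t => psi (Y k t)%:MP) = (fun k t => Y k t \mPo yvar F n r).
  by do 2 (apply: functional_extensionality => ?); rewrite mmapC.
have -> : (fun i : 'I_n => psi 'X_i) = (fun i => 'X_(lshift r i)).
  by apply: functional_extensionality => i; rewrite mmapX mmap1U.
by [].
Qed.

Lemma gen_poly_circuit : has_circuit_size (gen_poly GG) (Ktot n s d).
Proof.
rewrite gen_poly_UA psi_UA; apply: gen_circuit; apply: gen_Out.
  move=> k t hk ht; rewrite /Y hk ht /=.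
  left; exists (rshift n (inord (k * W + t))).
  by rewrite comp_mpolyXU -tnth_nth tnth_mktuple.
by move=> i; left; exists (lshift r i).
Qed.

Lemma gen_at_UA alpha : gen_at GG alpha = map_mpoly (meval alpha) UA.
Proof.
have hm : (msize (map_mpoly (meval alpha) UA) <= d.+1)%N.
  by apply: msize_le_coef => m hm; rewrite mcoeff_map_mpoly UA_coef0 // raddf0.
rewrite /gen_at {1}(mpolywE hm).
under [RHS]eq_bigr do rewrite mcoeff_map_mpoly.
by rewrite -(sum_mon (fun m => (UA@_m).@[alpha] *: 'X_[m])).
Qed.

Lemma map_UA (alpha : 'I_r -> F) : map_mpoly (meval alpha) UA =
  Out s (fun k t => ((Y k t).@[alpha])%:MP) (fun i => 'X_i) d.
Proof.
rewrite /UA Out_morph.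
have -> : (fun k t => map_mpoly (meval alpha) ((Y k t)%:MP : {mpoly {mpoly F[r]}[n]})) =
    (fun k t => ((Y k t).@[alpha])%:MP : {mpoly F[n]}).
  by do 2 (apply: functional_extensionality => ?); rewrite map_mpolyC.
have -> : (fun i : 'I_n => map_mpoly (meval alpha) ('X_i : {mpoly {mpoly F[r]}[n]})) =
    (fun i => 'X_i : {mpoly F[n]}).
  by apply: functional_extensionality => i; rewrite map_mpolyX.
by [].
Qed.

Lemma gen_at_circuit alpha : has_circuit_size (gen_at GG alpha) (Ktot n s d).
Proof.
rewrite gen_at_UA map_UA; apply: gen_circuit; apply: gen_Out.
  by move=> k t _ _; right; eexists.
by move=> i; left; exists i.
Qed.

Lemma Y_spec (c : circuit F) : (size c <= s)%N -> forall k t,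
  (Y k t).@[fun i : 'I_r => spec n s c (i %/ W) (i %% W)] = spec n s c k t.
Proof.
move=> hc k t; rewrite /Y; case: ifP => [/andP [hk ht]|h].
  have hW : (0 < W)%N by rewrite /Wd.
  rewrite mevalXU inordK; last by nia.
  by rewrite divnMDl // divn_small // addn0 modnMDl modn_small.
rewrite meval0 /spec; case: ifP => // /andP [h1 h2].
by move: h; rewrite h2 andbT (leq_trans h1 hc).
Qed.

End Main.


Definition LL : {mpoly int[3]} := 'X_(@Ordinal 3 0 isT) + 'X_(@Ordinal 3 1 isT) + 'X_(@Ordinal 3 2 isT) + 1.
Definition pp : {mpoly int[3]} := 30%:R * (LL * (LL * LL)).

Lemma pp_eval n d s : ((30 * (n + d + s + 1) ^ 3)%N)%:Z <= eval3 pp n d s.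
Proof.
have -> : eval3 pp n d s = 30%:R * ((n + d + s + 1)%N%:Z) ^+ 3.
  rewrite /eval3 /pp /LL !mevalM mevalMn meval1 !mevalD meval1 !mevalXU /=.
  by rewrite !PoszD !exprS expr0 mulr1.
rewrite !exprS expr0 mulr1 !expnS expn0 muln1; nia.
Qed.

Lemma Ktot_bound n d s : (Ktot n s d <= 30 * (n + d + s + 1) ^ 3)%N.
Proof. rewrite /Ktot /B0 /Be /Wd; nia. Qed.

Theorem lemma3p2 :
  exists p : {mpoly int[3]},
  forall (F : fieldType) (n d s : nat), (1 <= n)%N -> (1 <= s)%N ->
  forall (Dcl : {mpoly F[Nnd n d]} -> Prop),
    (exists C : {mpoly F[n]} -> Prop, succinct_hitting_set s Dcl C) ->
    exists (s' : nat) (r : nat) (G : 'I_(Nnd n d) -> {mpoly F[r]}),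
      s'%:Z <= eval3 p n d s /\
      succinct_generator s' s' Dcl G.
Proof.
exists pp => F n d s hn hs Dcl [C [hdeg hcirc hhit]].
exists (30 * (n + d + s + 1) ^ 3)%N, (s * Wd n s).+1, (@GG F n d s).
split; first exact: pp_eval.
split.
- exact: circuit_mono (Ktot_bound n d s) (gen_poly_circuit F n d s).
- move=> alpha; exact: circuit_mono (Ktot_bound n d s) (gen_at_circuit d alpha).
- move=> D hD; split; last first.
    by apply: contra_neq => ->; rewrite comp_mpoly0.
  move=> hD0.
  have [a [f hf ->] ha] := hhit D hD hD0.
  have [c [hcf hcs]] := hcirc f hf.
  have hfd := hdeg f hf.
  pose y0 := fun i : 'I_(s * Wd n s).+1 => spec n s c (i %/ Wd n s) (i %% Wd n s).
  have hmap : map_mpoly (meval y0) (UA F n d s) = f.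
    rewrite map_UA.
    have -> : (fun k t => ((Y F n s k t).@[y0])%:MP : {mpoly F[n]}) =
              (fun k t => (spec n s c k t)%:MP).
      by do 2 (apply: functional_extensionality => ?); rewrite Y_spec.
    exact: Out_spec.
  apply/negP => /eqP h0.
  have := congr1 (meval y0) h0; rewrite comp_mpoly_meval meval0.
  have E : (fun i => (tnth [tuple @GG F n d s i | i < Nnd n d] i).@[y0]) =1 @coeffv F n d f.
    by move=> i; rewrite tnth_mktuple /GG -mcoeff_map_mpoly hmap.
  by rewrite (meval_eq _ E) => h; rewrite h eqxx in ha.
Qed.
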